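(* The Schubert cell $S_{w_0,w_0}$ is the disjoint union of the following $G$-orbits of points $(P,Pw_0,Pw_0n)$: (i) for each $u\in\mathbb{R}^\times$, the orbit with $n=n(1,1,u)$, of dimension $8$ (the maximal dimension), these orbits being distinct for distinct $u$; (ii) three orbits of dimension $8$ with $n=n(0,1,1)$, $n(1,0,1)$, $n(1,1,0)$, each with trivial stabilizer; (iii) three orbits of dimension $7$: $n=n(1,0,0)$ with stabilizer $\{d(a,a,1/a^2):a\in\mathbb{R}^\times\}$, $n=n(0,1,0)$ with stabilizer $\{d(a,1/a^2,a):a\in\mathbb{R}^\times\}$, and $n=n(0,0,1)$ with stabilizer $\{d(1/a^2,a,a):a\in\mathbb{R}^\times\}$; (iv) one orbit of dimension $6$ with $n=n(0,0,0)$ and stabilizer $D$.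
   Context: $G=\mathrm{SL}_3(\mathbb{R})$, $P$ the upper triangular matrices in $G$, $D$ the diagonal matrices in $G$; $G$ acts on $X=(P\backslash G)^3$ by right multiplication in each coordinate. $n(x,y,z)=\begin{pmatrix}1&x&y\\0&1&z\\0&0&1\end{pmatrix}$, $d(a,b,c)=\operatorname{diag}(a,b,c)$. $w_0=\begin{pmatrix}0&0&-1\\0&-1&0\\-1&0&0\end{pmatrix}$. $S_{w_0,w_0}=\big(\{P\}\times P\backslash Pw_0P\times P\backslash Pw_0P\big)\cdot G$. The stabilizer of $(P,Pv,Pwn)$ is $P\cap v^{-1}Pv\cap (wn)^{-1}P(wn)$. *)

(* Defs.v *)
From HB Require Import structures.
From mathcomp Require Import all_boot all_order all_algebra.
From mathcomp Require Import reals.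
Set Implicit Arguments. Unset Strict Implicit. Unset Printing Implicit Defensive.
Import Order.TTheory GRing.Theory Num.Theory.
Local Open Scope ring_scope.

Section Defs.
Variable R : realType.
Local Notation M := 'M[R]_3.

Definition mx3 (a00 a01 a02 a10 a11 a12 a20 a21 a22 : R) : M :=
  \matrix_(i < 3, j < 3)
    nth 0 (nth [::] [:: [:: a00; a01; a02]; [:: a10; a11; a12];
                        [:: a20; a21; a22]] i) j.

Definition nmx (x y z : R) : M := mx3 1 x y  0 1 z  0 0 1.
Definition dmx (a b c : R) : M := mx3 a 0 0  0 b 0  0 0 c.
Definition w0 : M := mx3 0 0 (-1)  0 (-1) 0  (-1) 0 0.

Definition inG (g : M) : Prop := \det g = 1.
Definition upper (A : M) : Prop := forall i j : 'I_3, (j < i)%N -> A i j = 0.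
Definition inP (p : M) : Prop := inG p /\ upper p.

(* Right cosets: P g = P h  iff  g h^{-1} in P *)
Definition coset_eq (g h : M) : Prop := inP (g *m invmx h).

(* Points of X = (P\G)^3 are represented by triples of elements of G *)
Definition pt := (M * M * M)%type.
Definition inX (x : pt) : Prop := [/\ inG x.1.1, inG x.1.2 & inG x.2].
Definition pt_eq (x y : pt) : Prop :=
  [/\ coset_eq x.1.1 y.1.1, coset_eq x.1.2 y.1.2 & coset_eq x.2 y.2].
Definition act (x : pt) (g : M) : pt := (x.1.1 *m g, x.1.2 *m g, x.2 *m g).

Definition in_Gorbit (x y : pt) : Prop :=
  inX y /\ exists g, inG g /\ pt_eq y (act x g).

Definition in_stab (x : pt) (g : M) : Prop := inG g /\ pt_eq (act x g) x.

Definition inPw0P (v : M) : Prop := exists p q, inP p /\ inP q /\ v = p *m w0 *m q.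

(* S_{w0,w0} = ({P} x P\Pw0P x P\Pw0P) . G *)
Definition in_S (y : pt) : Prop :=
  inX y /\ exists v v' g, [/\ inPw0P v, inPw0P v', inG g &
                             pt_eq y (act (1%:M, v, v') g)].

Definition base_pt (n : M) : pt := (1%:M, w0, w0 *m n).

(* Dimension of the orbit through x = dim G - dim Lie(Stab_x), where
   Lie(Stab_x) = { X in sl_3 : g_i X g_i^{-1} is upper triangular, i=1,2,3 }
   (the Lie algebra of the stabilizer  g_1^{-1}Pg_1 ∩ g_2^{-1}Pg_2 ∩ g_3^{-1}Pg_3). *)
Definition lowpart (A : M) : M := \matrix_(i, j) if (j < i)%N then A i j else 0.
Definition stab_constraints (x : pt) (X : M) : (M * M) * (M * R^o) :=
  ((lowpart (x.1.1 *m X *m invmx x.1.1), lowpart (x.1.2 *m X *m invmx x.1.2)),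
   (lowpart (x.2 *m X *m invmx x.2), (\tr X : R^o))).
Definition stab_lie_dim (x : pt) : nat := \dim (lker (linfun (stab_constraints x))).
Definition orbit_dim (x : pt) : nat := (8 - stab_lie_dim x)%N.

End Defs.

Inductive rep (R : Type) :=
| Gen of R
| N011 | N101 | N110 | N100 | N010 | N001 | N000.
Arguments N011 {R}. Arguments N101 {R}. Arguments N110 {R}. Arguments N100 {R}.
Arguments N010 {R}. Arguments N001 {R}. Arguments N000 {R}.

Definition rep_n (R : realType) (r : rep R) : 'M[R]_3 :=
  match r with
  | Gen u => nmx 1 1 u
  | N011 => nmx 0 1 1 | N101 => nmx 1 0 1 | N110 => nmx 1 1 0
  | N100 => nmx 1 0 0 | N010 => nmx 0 1 0 | N001 => nmx 0 0 1
  | N000 => nmx 0 0 0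
  end.

Definition rep_valid (R : realType) (r : rep R) : Prop :=
  match r with Gen u => u <> 0 | _ => True end.

(* Main.v *)
Require Import Defs.
From HB Require Import structures.
From mathcomp Require Import all_boot all_order all_algebra.
From mathcomp Require Import reals.
From mathcomp Require Import ring lra.
Set Implicit Arguments. Unset Strict Implicit. Unset Printing Implicit Defensive.
Import Order.TTheory GRing.Theory Num.Theory.
Local Open Scope ring_scope.

Ltac simp := rewrite ?(mul0r, mulr0, add0r, addr0, mulN1r, mulrN1, mul1r, mulr1, oppr0, subr0, sub0r).
Ltac zero_out := repeat match goal with
 | H : ?v = 0 |- _ => is_var v; subst v
 | H : 0 = ?v |- _ => is_var v; subst v
 | H : ?u * ?v = 0 |- _ => move/eqP: H; rewrite mulf_eq0 => /orP[/eqP H|/eqP H]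
 | H : 0 = ?u * ?v |- _ => move/esym/eqP: H; rewrite mulf_eq0 => /orP[/eqP H|/eqP H]
end.
Ltac nz := repeat (apply: mulf_neq0 || apply: invr_neq0 || apply: oner_neq0); try done.
Ltac nzs := repeat (apply/andP; split); nz.

Section L.
Variable R : realType.
Local Notation M := 'M[R]_3.
Local Notation W := (@w0 R).
Definition i0 : 'I_3 := @Ordinal 3 0 isT.
Definition i1 : 'I_3 := @Ordinal 3 1 isT.
Definition i2 : 'I_3 := @Ordinal 3 2 isT.

Lemma ord3P (P : 'I_3 -> Prop) : P i0 -> P i1 -> P i2 -> forall i, P i.
Proof.
move=> h0 h1 h2 [[|[|[|k]]] Hk] //.
- by rewrite (_ : Ordinal Hk = i0) //; apply/val_inj.
- by rewrite (_ : Ordinal Hk = i1) //; apply/val_inj.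
- by rewrite (_ : Ordinal Hk = i2) //; apply/val_inj.
Qed.

Lemma mx3_eta (A : M) : A = mx3 (A i0 i0) (A i0 i1) (A i0 i2) (A i1 i0) (A i1 i1) (A i1 i2)
   (A i2 i0) (A i2 i1) (A i2 i2).
Proof. by apply/matrixP; elim/ord3P => //; elim/ord3P => //; rewrite mxE. Qed.

Lemma mx3_mul a00 a01 a02 a10 a11 a12 a20 a21 a22 b00 b01 b02 b10 b11 b12 b20 b21 b22 :
  mx3 a00 a01 a02 a10 a11 a12 a20 a21 a22 *m (mx3 b00 b01 b02 b10 b11 b12 b20 b21 b22 : M) =
  mx3 (a00*b00+a01*b10+a02*b20) (a00*b01+a01*b11+a02*b21) (a00*b02+a01*b12+a02*b22)
      (a10*b00+a11*b10+a12*b20) (a10*b01+a11*b11+a12*b21) (a10*b02+a11*b12+a12*b22)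
      (a20*b00+a21*b10+a22*b20) (a20*b01+a21*b11+a22*b21) (a20*b02+a21*b12+a22*b22).
Proof.
apply/matrixP; elim/ord3P; elim/ord3P;
  by rewrite !mxE !big_ord_recr big_ord0 /= !mxE /= add0r.
Qed.

Lemma mx3_inj a00 a01 a02 a10 a11 a12 a20 a21 a22 b00 b01 b02 b10 b11 b12 b20 b21 b22 :
  mx3 a00 a01 a02 a10 a11 a12 a20 a21 a22 = (mx3 b00 b01 b02 b10 b11 b12 b20 b21 b22 : M) ->
  a00 = b00 /\ a01 = b01 /\ a02 = b02 /\ a10 = b10 /\ a11 = b11 /\ a12 = b12 /\ a20 = b20 /\ a21 = b21 /\ a22 = b22.
Proof.
move=> /matrixP E.
have := E i0 i0; have := E i0 i1; have := E i0 i2; have := E i1 i0; have := E i1 i1;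
have := E i1 i2; have := E i2 i0; have := E i2 i1; have := E i2 i2.
by rewrite !mxE /= => *.
Qed.

Lemma mx3_ext a00 a01 a02 a10 a11 a12 a20 a21 a22 b00 b01 b02 b10 b11 b12 b20 b21 b22 :
  a00 = b00 -> a01 = b01 -> a02 = b02 -> a10 = b10 -> a11 = b11 -> a12 = b12 -> a20 = b20 -> a21 = b21 -> a22 = b22 ->
  mx3 a00 a01 a02 a10 a11 a12 a20 a21 a22 = (mx3 b00 b01 b02 b10 b11 b12 b20 b21 b22 : M).
Proof. by move=> *; subst. Qed.

Lemma mx3_det a00 a01 a02 a10 a11 a12 a20 a21 a22 :
  \det (mx3 a00 a01 a02 a10 a11 a12 a20 a21 a22 : M) =
  a00 * (a11 * a22 - a12 * a21) - a01 * (a10 * a22 - a12 * a20) + a02 * (a10 * a21 - a11 * a20).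
Proof.
rewrite (expand_det_row _ i0) !big_ord_recr big_ord0 /= add0r.
rewrite /cofactor !(expand_det_row _ ord0) !big_ord_recr big_ord0 /= !add0r.
rewrite /cofactor !big_ord0 !add0r !det_mx11 !mxE /= !add0n; ring.
Qed.



Lemma mx3_one : (1%:M : M) = mx3 1 0 0 0 1 0 0 0 1.
Proof. by apply/matrixP; elim/ord3P; elim/ord3P; rewrite !mxE. Qed.

Lemma mx3_upper a00 a01 a02 a10 a11 a12 a20 a21 a22 :
  upper (mx3 a00 a01 a02 a10 a11 a12 a20 a21 a22 : M) <-> (a10 = 0 /\ a20 = 0 /\ a21 = 0).
Proof.
split.
- move=> U; have := U i1 i0 isT; have := U i2 i0 isT; have := U i2 i1 isT.
  by rewrite !mxE /=.
- case=> [h1 [h2 h3]]; elim/ord3P; elim/ord3P => //=; by rewrite mxE.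
Qed.

Lemma mx3_lowpart a00 a01 a02 a10 a11 a12 a20 a21 a22 :
  lowpart (mx3 a00 a01 a02 a10 a11 a12 a20 a21 a22 : M) = mx3 0 0 0 a10 0 0 a20 a21 0.
Proof. by apply/matrixP; elim/ord3P; elim/ord3P; rewrite !mxE. Qed.

Lemma mx3_tr a00 a01 a02 a10 a11 a12 a20 a21 a22 :
  \tr (mx3 a00 a01 a02 a10 a11 a12 a20 a21 a22 : M) = a00 + a11 + a22.
Proof. by rewrite /mxtrace !big_ord_recr big_ord0 /= !mxE /= add0r. Qed.

Lemma mx3_scale k a00 a01 a02 a10 a11 a12 a20 a21 a22 :
  k *: (mx3 a00 a01 a02 a10 a11 a12 a20 a21 a22 : M) =
  mx3 (k*a00) (k*a01) (k*a02) (k*a10) (k*a11) (k*a12) (k*a20) (k*a21) (k*a22).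
Proof. by apply/matrixP; elim/ord3P; elim/ord3P; rewrite !mxE. Qed.

Lemma mx3_add a00 a01 a02 a10 a11 a12 a20 a21 a22 b00 b01 b02 b10 b11 b12 b20 b21 b22 :
  mx3 a00 a01 a02 a10 a11 a12 a20 a21 a22 + (mx3 b00 b01 b02 b10 b11 b12 b20 b21 b22 : M) =
  mx3 (a00+b00) (a01+b01) (a02+b02) (a10+b10) (a11+b11) (a12+b12) (a20+b20) (a21+b21) (a22+b22).
Proof. by apply/matrixP; elim/ord3P; elim/ord3P; rewrite !mxE. Qed.

Lemma mx3_zero : (0 : M) = mx3 0 0 0 0 0 0 0 0 0.
Proof. by apply/matrixP; elim/ord3P; elim/ord3P; rewrite !mxE. Qed.

Lemma invmx_eq (A B : M) : A *m B = 1%:M -> invmx A = B.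
Proof.
move=> AB; have [uA uB] := mulmx1_unit AB.
by rewrite -[invmx A]mulmx1 -AB mulmxA mulVmx // mul1mx.
Qed.

Lemma inG_unit (g : M) : inG g -> g \in unitmx.
Proof. by rewrite /inG unitmxE => ->; exact: unitr1. Qed.

Lemma w0w0 : W *m W = 1%:M :> M.
Proof. by rewrite /w0 mx3_mul mx3_one; apply: mx3_ext; ring. Qed.

Lemma invw0 : invmx W = W :> M.
Proof. exact/invmx_eq/w0w0. Qed.

Lemma inGw0 : inG (W : M).
Proof. by rewrite /inG /w0 mx3_det; ring. Qed.

Lemma inG1 : inG (1%:M : M).
Proof. exact: det1. Qed.

Lemma inGM (g h : M) : inG g -> inG h -> inG (g *m h).
Proof. by rewrite /inG det_mulmx => -> ->; rewrite mulr1. Qed.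

Lemma upperM (A B : M) : upper A -> upper B -> upper (A *m B).
Proof.
rewrite [A]mx3_eta [B]mx3_eta => /mx3_upper [-> [-> ->]] /mx3_upper [-> [-> ->]].
rewrite mx3_mul; apply/mx3_upper; rewrite !(mul0r, mulr0, add0r, addr0); by [].
Qed.

Lemma inPM (g h : M) : inP g -> inP h -> inP (g *m h).
Proof. by move=> [g1 g2] [h1 h2]; split; [exact: inGM|exact: upperM]. Qed.

Lemma inP_form (p : M) : inP p -> exists a b c d e f : R,
  p = mx3 a b c 0 d e 0 0 f /\ a * d * f = 1.
Proof.
case; rewrite /inG [p]mx3_eta mx3_upper => D [h1 [h2 h3]].
rewrite h1 h2 h3 in D *; rewrite mx3_det in D.
do 6 eexists; split; first reflexivity.
by rewrite -D; ring.
Qed.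

Lemma inG_form (g : M) : inG g -> exists a00 a01 a02 a10 a11 a12 a20 a21 a22 : R,
  g = mx3 a00 a01 a02 a10 a11 a12 a20 a21 a22 /\
  a00 * (a11 * a22 - a12 * a21) - a01 * (a10 * a22 - a12 * a20) + a02 * (a10 * a21 - a11 * a20) = 1.
Proof.
rewrite /inG [g]mx3_eta mx3_det => D.
by do 9 eexists; split; first reflexivity.
Qed.

Lemma inP_mx3 a b c d e f : a * d * f = 1 -> inP (mx3 a b c 0 d e 0 0 f : M).
Proof.
move=> H; split; last by rewrite mx3_upper.
by rewrite /inG mx3_det -H; ring.
Qed.

Lemma inPV (p : M) : inP p -> inP (invmx p).
Proof.
move=> /inP_form [a [b [c [d [e [f [-> H]]]]]]].
have a0 : a != 0 by apply/eqP => a0; move: H; rewrite a0 !mul0r => /eqP; rewrite eq_sym oner_eq0.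
have d0 : d != 0 by apply/eqP => d0; move: H; rewrite d0 mulr0 !mul0r => /eqP; rewrite eq_sym oner_eq0.
have f0 : f != 0 by apply/eqP => f0; move: H; rewrite f0 mulr0 => /eqP; rewrite eq_sym oner_eq0.
rewrite (@invmx_eq _ (mx3 (1/a) (- b/(a*d)) ((b*e - c*d)/(a*d*f)) 0 (1/d) (-e/(d*f)) 0 0 (1/f))).
  apply: inP_mx3; rewrite (_ : 1/a*(1/d)*(1/f) = 1/(a*d*f)); first by rewrite H divr1.
  by field; rewrite ?a0 ?d0 ?f0.
rewrite mx3_mul mx3_one; apply: mx3_ext; by field; rewrite ?a0 ?d0 ?f0.
Qed.

Lemma inP1 : inP (1%:M : M).
Proof. by rewrite mx3_one; apply: inP_mx3; ring. Qed.


Definition ceq (g h : M) := exists p : M, inP p /\ g = p *m h.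

Lemma inP_unit (p : M) : inP p -> p \in unitmx.
Proof. by case=> /inG_unit. Qed.

Lemma coset_eqP g h : inG h -> coset_eq g h <-> ceq g h.
Proof.
move=> /inG_unit hu; split.
- by move=> H; exists (g *m invmx h); split => //; rewrite mulmxKV.
- by case=> p [pP ->]; rewrite /coset_eq mulmxK.
Qed.

Lemma ceq_refl g : ceq g g.
Proof. by exists 1%:M; split; [exact: inP1 | rewrite mul1mx]. Qed.

Lemma ceq_sym g h : ceq g h -> ceq h g.
Proof.
case=> p [pP ->]; exists (invmx p); split; first exact: inPV.
by rewrite mulmxA mulVmx ?mul1mx //; exact: inP_unit.
Qed.

Lemma ceq_trans g h k : ceq g h -> ceq h k -> ceq g k.
Proof.
case=> p [pP ->] [q [qP ->]]; exists (p *m q); split; first exact: inPM.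
by rewrite mulmxA.
Qed.

Lemma ceq_mulr g h k : ceq g h -> ceq (g *m k) (h *m k).
Proof. by case=> p [pP ->]; exists p; split => //; rewrite mulmxA. Qed.

Lemma ceq_mulr_inv g h k : inG k -> ceq (g *m k) (h *m k) -> ceq g h.
Proof.
move=> /inG_unit ku /(ceq_mulr (invmx k)); rewrite -!mulmxA !mulmxV // !mulmx1; by [].
Qed.

Definition pteq (x y : pt R) := [/\ ceq x.1.1 y.1.1, ceq x.1.2 y.1.2 & ceq x.2 y.2].

Lemma pt_eqP (x y : pt R) : inX y -> pt_eq x y <-> pteq x y.
Proof.
case=> h1 h2 h3; rewrite /pt_eq /pteq; split.
- by case=> /(coset_eqP _ h1) ? /(coset_eqP _ h2) ? /(coset_eqP _ h3) ?.
- by case=> /(coset_eqP _ h1) ? /(coset_eqP _ h2) ? /(coset_eqP _ h3) ?.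
Qed.

Lemma inX_act (x : pt R) (g : M) : inX x -> inG g -> inX (act x g).
Proof. by case=> h1 h2 h3 hg; split; apply: inGM. Qed.

Lemma inGn x y z : inG (nmx x y z : M).
Proof. by rewrite /inG /nmx mx3_det; ring. Qed.

Lemma inPn x y z : inP (nmx x y z : M).
Proof. by rewrite /nmx; apply: inP_mx3; ring. Qed.

Lemma inX_base x y z : inX (base_pt (nmx x y z : M)).
Proof. by split; [exact: inG1 | exact: inGw0 | apply: inGM; [exact: inGw0|exact: inGn]]. Qed.

Lemma base_rel x y z x' y' z' g : inG g ->
  pteq (act (base_pt (nmx x y z)) g) (base_pt (nmx x' y' z')) ->
  exists a b c : R, g = dmx a b c /\ a*b*c = 1 /\ x*b = a*x' /\ y*c = a*y' /\ z*c = b*z'.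
Proof.
move=> gG [] /=; rewrite mul1mx => -[p1 [/inP_form [a [b [c [d [e [f [-> H]]]]]] ->]]].
rewrite mulmx1.
move=> [p2 [/inP_form [a2 [b2 [c2 [d2 [e2 [f2 [-> H2]]]]]] E2]]].
move=> [p3 [/inP_form [a3 [b3 [c3 [d3 [e3 [f3 [-> H3]]]]]] E3]]].
move: E2 E3; rewrite /w0 /nmx !mx3_mul.
move=> /mx3_inj [h1 [h2 [h3 [h4 [h5 [h6 [h7 [h8 h9]]]]]]]].
move=> /mx3_inj [k1 [k2 [k3 [k4 [k5 [k6 [k7 [k8 k9]]]]]]]].
move: h1 h2 h3 h4 h5 h6 h7 h8 h9 k1 k2 k3 k4 k5 k6 k7 k8 k9; simp.
move=> _ _ _ _ _ /eqP; rewrite oppr_eq0 => /eqP e0 _ /eqP; rewrite oppr_eq0 => /eqP b0 /eqP.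
rewrite oppr_eq0 => /eqP c0 /esym/eqP; rewrite oppr_eq0 => /eqP c30.
subst; simp => k2 _ /esym/eqP; rewrite oppr_eq0 => /eqP e30; subst; simp.
move=> /oppr_inj d30 k5 /oppr_inj f30; subst => k6 k7.
exists f3, d3, f; split => //; split => //.
split; [lra | split; lra].
Qed.


Lemma base_rel_conv x y z x' y' z' a b c : a*b*c = 1 -> x*b = a*x' -> y*c = a*y' -> z*c = b*z' ->
  pteq (act (base_pt (nmx x y z)) (dmx a b c)) (base_pt (nmx x' y' z')).
Proof.
move=> H e1 e2 e3; split => /=.
- exists (dmx a b c); split; last by rewrite mul1mx mulmx1.
  by apply: inP_mx3.
- exists (dmx c b a); split; first by apply: inP_mx3; rewrite -H; ring.
  rewrite /dmx /w0 !mx3_mul; apply: mx3_ext; ring.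
- exists (dmx c b a); split; first by apply: inP_mx3; rewrite -H; ring.
  rewrite /dmx /w0 /nmx !mx3_mul; apply: mx3_ext; simp => //; try lra.
Qed.

Lemma inG_inv (g : M) : inG g -> inG (invmx g).
Proof. by rewrite /inG det_inv => ->; rewrite invr1. Qed.

Lemma orbit_meet (b1 b2 y : pt R) : inX b1 -> inX b2 ->
  in_Gorbit b1 y -> in_Gorbit b2 y -> exists g, inG g /\ pteq (act b1 g) b2.
Proof.
move=> X1 X2 [yX [g1 [g1G /(pt_eqP _ (inX_act X1 g1G)) [h1 h2 h3]]]].
move=> [_ [g2 [g2G /(pt_eqP _ (inX_act X2 g2G)) [k1 k2 k3]]]].
exists (g1 *m invmx g2); split; first by apply: inGM => //; apply: inG_inv.
have u2 := inG_unit g2G.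
split; rewrite /= !mulmxA.
- rewrite -[b2.1.1](mulmxK u2); apply: ceq_mulr; apply: ceq_trans (ceq_sym h1) k1.
- rewrite -[b2.1.2](mulmxK u2); apply: ceq_mulr; apply: ceq_trans (ceq_sym h2) k2.
- rewrite -[b2.2](mulmxK u2); apply: ceq_mulr; apply: ceq_trans (ceq_sym h3) k3.
Qed.

Lemma abc_nz (a b c : R) : a * b * c = 1 -> a <> 0 /\ b <> 0 /\ c <> 0.
Proof.
move=> H; split; [|split] => E; subst; move: H; simp => /eqP; by rewrite eq_sym oner_eq0.
Qed.


Lemma disjoint_orbits (r1 r2 : rep R) y : rep_valid r1 -> rep_valid r2 ->
  in_Gorbit (base_pt (rep_n r1)) y -> in_Gorbit (base_pt (rep_n r2)) y -> r1 = r2.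
Proof.
move=> v1 v2 o1 o2.
have X1 : inX (base_pt (rep_n r1)) by case: (r1) => *; apply: inX_base.
have X2 : inX (base_pt (rep_n r2)) by case: (r2) => *; apply: inX_base.
have [g [gG]] := orbit_meet X1 X2 o1 o2.
case: r1 v1 {X1 o1} => [u1|||||||] v1; case: r2 v2 {X2 o2} => [u2|||||||] v2 /=;
  move=> /(base_rel gG) [a [b [c [_ [H [e1 [e2 e3]]]]]]]; move: e1 e2 e3; simp => e1 e2 e3;
  have [a0 [b0 c0]] := abc_nz H; try by [].
all: zero_out; try (exfalso; lra); try (match goal with H : ?a <> ?a |- _ => by case: H end).
all: try (exfalso; match goal with H : rep_valid _ |- _ => by apply: H end).
subst; congr Gen; rewrite mulrC in e3; apply: (mulfI _ e3); exact/eqP.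
Qed.

End L.

Section L2.
Variable R : realType.
Local Notation M := 'M[R]_3.
Local Notation W := (@w0 R).

Lemma stab_base (x y z : R) g : in_stab (base_pt (nmx x y z)) g <->
  exists a b c : R, g = dmx a b c /\ a*b*c = 1 /\ x*b = a*x /\ y*c = a*y /\ z*c = b*z.
Proof.
split.
- case=> gG /(pt_eqP _ (inX_base x y z)); exact: base_rel.
- case=> [a [b [c [-> [H [e1 [e2 e3]]]]]]]; split.
    by rewrite /inG /dmx mx3_det -H; ring.
  by apply/(pt_eqP _ (inX_base x y z)); apply: base_rel_conv.
Qed.

Lemma cube1 (a : R) : a * a * a = 1 -> a = 1.
Proof.
move=> H; have : (a - 1) * (a * a + a + 1) = a * a * a - 1 by ring.
rewrite H subrr.
move/eqP; rewrite mulf_eq0 => /orP[/eqP|]; first by move/eqP; rewrite subr_eq0 => /eqP.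
have : 0 < a * a + a + 1 by nra.
by move=> /lt0r_neq0 /negPf ->.
Qed.

Lemma stab_N011 g : in_stab (base_pt (@nmx R 0 1 1)) g <-> g = 1%:M.
Proof.
rewrite stab_base; split.
- case=> [a [b [c [-> [H [e1 [e2 e3]]]]]]]; move: e1 e2 e3; simp => e1 e2 e3.
  subst; have -> := cube1 H; by rewrite mx3_one.
- move=> ->; exists 1, 1, 1; rewrite mx3_one; simp; by [].
Qed.

Lemma stab_N101 g : in_stab (base_pt (@nmx R 1 0 1)) g <-> g = 1%:M.
Proof.
rewrite stab_base; split.
- case=> [a [b [c [-> [H [e1 [e2 e3]]]]]]]; move: e1 e2 e3; simp => e1 e2 e3.
  subst; have -> := cube1 H; by rewrite mx3_one.
- move=> ->; exists 1, 1, 1; rewrite mx3_one; simp; by [].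
Qed.

Lemma stab_N110 g : in_stab (base_pt (@nmx R 1 1 0)) g <-> g = 1%:M.
Proof.
rewrite stab_base; split.
- case=> [a [b [c [-> [H [e1 [e2 e3]]]]]]]; move: e1 e2 e3; simp => e1 e2 e3.
  subst; have -> := cube1 H; by rewrite mx3_one.
- move=> ->; exists 1, 1, 1; rewrite mx3_one; simp; by [].
Qed.

Lemma stab_N100 g : in_stab (base_pt (@nmx R 1 0 0)) g <->
      exists a : R, a <> 0 /\ g = dmx a a (1 / a ^+ 2).
Proof.
rewrite stab_base; split.
- case=> [a [b [c [-> [H [e1 [e2 e3]]]]]]]; move: e1 e2 e3; simp => e1 e2 e3.
  subst; have [a0 _] := abc_nz H; exists a; split => //; congr dmx.
  apply: (@mulfI _ (a * a)); first by rewrite mulf_neq0 //; apply/eqP.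
  rewrite H; by field; apply/eqP.
- move=> [a [a0 ->]]; exists a, a, (1 / a ^+ 2); simp; split => //; split => //.
  by field; apply/eqP.
Qed.

Lemma stab_N010 g : in_stab (base_pt (@nmx R 0 1 0)) g <->
      exists a : R, a <> 0 /\ g = dmx a (1 / a ^+ 2) a.
Proof.
rewrite stab_base; split.
- case=> [a [b [c [-> [H [e1 [e2 e3]]]]]]]; move: e1 e2 e3; simp => e1 e2 e3.
  subst; have [a0 _] := abc_nz H; exists a; split => //; congr dmx.
  apply: (@mulfI _ (a * a)); first by rewrite mulf_neq0 //; apply/eqP.
  rewrite -H; by field; apply/eqP.
- move=> [a [a0 ->]]; exists a, (1 / a ^+ 2), a; simp; split => //; split => //.
  by field; apply/eqP.
Qed.

Lemma stab_N001 g : in_stab (base_pt (@nmx R 0 0 1)) g <->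
      exists a : R, a <> 0 /\ g = dmx (1 / a ^+ 2) a a.
Proof.
rewrite stab_base; split.
- case=> [a [b [c [-> [H [e1 [e2 e3]]]]]]]; move: e1 e2 e3; simp => e1 e2 e3.
  subst; have [_ [b0 _]] := abc_nz H; exists b; split => //; congr dmx.
  apply: (@mulfI _ (b * b)); first by rewrite mulf_neq0 //; apply/eqP.
  rewrite -H; by field; apply/eqP.
- move=> [a [a0 ->]]; exists (1 / a ^+ 2), a, a; simp; split => //; split => //.
  by field; apply/eqP.
Qed.

Lemma stab_N000 g : in_stab (base_pt (@nmx R 0 0 0)) g <->
      exists a b c : R, a * b * c = 1 /\ g = dmx a b c.
Proof.
rewrite stab_base; split.
- by case=> [a [b [c [-> [H _]]]]]; exists a, b, c.
- by case=> [a [b [c [H ->]]]]; exists a, b, c; simp.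
Qed.

End L2.

Section L3.
Variable R : realType.
Local Notation M := 'M[R]_3.
Local Notation W := (@w0 R).

Lemma lowpart_linear : linear (@lowpart R).
Proof. by move=> a A B; apply/matrixP => i j; rewrite !mxE; case: ifP; simp. Qed.

Variable x : pt R.

Fact sc_linear : linear (stab_constraints x).
Proof.
move=> a A B; rewrite /stab_constraints.
have L := lowpart_linear.
rewrite !mulmxDr !mulmxDl -!scalemxAr -!scalemxAl !L mxtraceD mxtraceZ.
by [].
Qed.

HB.instance Definition _ := GRing.isLinear.Build R 'M[R]_3 _ _ (stab_constraints x) sc_linear.

Lemma mem_ker (X : M) : (X \in lker (linfun (stab_constraints x))) = (stab_constraints x X == 0).
Proof. by rewrite memv_ker lfunE. Qed.

End L3.

Section L4.
Variable R : realType.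
Local Notation M := 'M[R]_3.
Local Notation W := (@w0 R).

Lemma pair_eq0 (U V : zmodType) (A : U) (B : V) : ((A, B) == 0) = (A == 0) && (B == 0).
Proof. by []. Qed.

Lemma invWn (x y z : R) : invmx (W *m nmx x y z) = nmx (-x) (x*z - y) (-z) *m W.
Proof.
apply: invmx_eq; rewrite /w0 /nmx !mx3_mul mx3_one; apply: mx3_ext; ring.
Qed.

Lemma lowpart0 a00 a01 a02 a10 a11 a12 a20 a21 a22 :
  (lowpart (mx3 a00 a01 a02 a10 a11 a12 a20 a21 a22 : M) == 0) = [&& a10 == 0, a20 == 0 & a21 == 0].
Proof.
rewrite mx3_lowpart mx3_zero; apply/eqP/and3P.
- by move/mx3_inj => [_ [_ [_ [-> [_ [_ [-> [-> _]]]]]]]].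
- by case=> /eqP -> /eqP -> /eqP ->.
Qed.

Lemma ker_base (x y z : R) (X : M) :
  X \in lker (linfun (stab_constraints (base_pt (nmx x y z)))) <->
  exists p q r, X = dmx p q r /\ p+q+r = 0 /\ x*(q-p) = 0 /\ y*(r-p) = 0 /\ z*(r-q) = 0.
Proof.
rewrite mem_ker /stab_constraints /base_pt /= invWn invmx1 invw0 !pair_eq0.
rewrite [X]mx3_eta.
move: (X i0 i0) (X i0 i1) (X i0 i2) (X i1 i0) (X i1 i1) (X i1 i2) (X i2 i0) (X i2 i1) (X i2 i2).
move=> p a01 a02 a10 q a12 a20 a21 r.
rewrite mx3_one /w0 /nmx !mx3_mul !lowpart0 mx3_tr; simp.
split.
- case/and3P => /andP [/and3P [/eqP h1 /eqP h2 /eqP h3] /and3P [/eqP k1 /eqP k2 /eqP k3]].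
  case/and3P => /eqP l1 /eqP l2 /eqP l3 /eqP t.
  subst. move: k1 k2 k3 l1 l2 l3; rewrite ?opprK; simp => k1 k2 k3 l1 l2 l3; subst.
  move: l1 l2 l3; simp => l1 l2 l3.
  have hx : x * (q - p) = 0 by lra.
  have hxz : z * (x * (q - p)) = 0 by rewrite hx mulr0.
  exists p, q, r; split => //; split => //; split => //; split; lra.
- case=> [p0 [q0 [r0 [/mx3_inj [-> [-> [-> [-> [-> [-> [-> [-> ->]]]]]]]] [t [hx [hy hz]]]]]]].
  have hxz : z * (x * (q0 - p0)) = 0 by rewrite hx mulr0.
  rewrite ?opprK; simp; rewrite !eqxx /=.
  rewrite t eqxx andbT; apply/and3P; split; apply/eqP; lra.
Qed.


Lemma dim_K0 (x y z : R) :
  (forall p q r : R, p+q+r=0 -> x*(q-p)=0 -> y*(r-p)=0 -> z*(r-q)=0 -> p = 0 /\ q = 0 /\ r = 0) ->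
  stab_lie_dim (base_pt (nmx x y z)) = 0%N.
Proof.
move=> H; rewrite /stab_lie_dim; apply/eqP; rewrite dimv_eq0 -subv0; apply/subvP => X.
case/ker_base => [p [q [r [-> [t [hx [hy hz]]]]]]].
have [-> [-> ->]] := H p q r t hx hy hz.
by rewrite memv0 /dmx -mx3_zero.
Qed.

Lemma dim_K1 (x y z : R) (A : M) : A != 0 ->
  (forall p q r : R, p+q+r=0 -> x*(q-p)=0 -> y*(r-p)=0 -> z*(r-q)=0 -> exists k, dmx p q r = k *: A) ->
  (forall k, exists p q r : R, k *: A = dmx p q r /\
      p+q+r=0 /\ x*(q-p)=0 /\ y*(r-p)=0 /\ z*(r-q)=0) ->
  stab_lie_dim (base_pt (nmx x y z)) = 1%N.
Proof.
move=> A0 H1 H2; rewrite /stab_lie_dim.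
suff -> : lker (linfun (stab_constraints (base_pt (nmx x y z)))) = <[A]>%VS by rewrite dim_vline A0.
apply/vspaceP => X; apply/idP/idP.
- case/ker_base => [p [q [r [-> [t [hx [hy hz]]]]]]].
  by have [k ->] := H1 p q r t hx hy hz; apply/vlineP; exists k.
- by case/vlineP => k ->; apply/ker_base; apply: H2.
Qed.


Lemma dmx_eq0 (a b c : R) : dmx a b c = 0 -> a = 0 /\ b = 0 /\ c = 0.
Proof. by rewrite /dmx mx3_zero => /mx3_inj [-> [_ [_ [_ [-> [_ [_ [_ ->]]]]]]]]. Qed.

Lemma dim_K2 : stab_lie_dim (base_pt (@nmx R 0 0 0)) = 2%N.
Proof.
rewrite /stab_lie_dim.
set A : M := dmx 1 0 (-1); set B : M := dmx 0 1 (-1).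
suff -> : lker (linfun (stab_constraints (base_pt (@nmx R 0 0 0)))) = (<[A]> + <[B]>)%VS.
  rewrite dimv_disjoint_sum ?dim_vline.
    have -> : A != 0 by apply/eqP => /dmx_eq0 [h _]; move/eqP: h; rewrite oner_eq0.
    by have -> : B != 0 by apply/eqP => /dmx_eq0 [_ [h _]]; move/eqP: h; rewrite oner_eq0.
  apply/eqP; rewrite -subv0; apply/subvP => X; rewrite memv_cap memv0.
  case/andP => /vlineP [k ->] /vlineP [l]; rewrite /A /B /dmx !mx3_scale.
  move=> /mx3_inj [h _]; move: h; simp => ->; simp; by rewrite -mx3_zero.
apply/vspaceP => X; apply/idP/idP.
- case/ker_base => [p [q [r [-> [t _]]]]].
  apply/memv_addP; exists (p *: A); first by apply/vlineP; exists p.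
  exists (q *: B); first by apply/vlineP; exists q.
  rewrite /A /B /dmx !mx3_scale mx3_add; apply: mx3_ext; simp; lra.
- case/memv_addP => u /vlineP [k ->] [v /vlineP [l ->] ->].
  apply/ker_base; exists k, l, (- k - l); split.
    by rewrite /A /B /dmx !mx3_scale mx3_add; apply: mx3_ext; simp; lra.
  by simp; split => //; lra.
Qed.

Lemma dim_gen (u : R) : stab_lie_dim (base_pt (nmx 1 1 u)) = 0%N.
Proof. by apply: dim_K0 => p q r t hx hy hz; split; [|split]; lra. Qed.
Lemma dim_N011 : stab_lie_dim (base_pt (@nmx R 0 1 1)) = 0%N.
Proof. by apply: dim_K0 => p q r t hx hy hz; split; [|split]; lra. Qed.
Lemma dim_N101 : stab_lie_dim (base_pt (@nmx R 1 0 1)) = 0%N.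
Proof. by apply: dim_K0 => p q r t hx hy hz; split; [|split]; lra. Qed.
Lemma dim_N110 : stab_lie_dim (base_pt (@nmx R 1 1 0)) = 0%N.
Proof. by apply: dim_K0 => p q r t hx hy hz; split; [|split]; lra. Qed.

Lemma dim_N100 : stab_lie_dim (base_pt (@nmx R 1 0 0)) = 1%N.
Proof.
apply: (@dim_K1 _ _ _ (dmx 1 1 (-2))).
- by apply/eqP => /dmx_eq0 [h _]; move/eqP: h; rewrite oner_eq0.
- move=> p q r t hx hy hz; exists p; rewrite /dmx mx3_scale; apply: mx3_ext; simp; lra.
- move=> k; exists k, k, (-2 * k); rewrite /dmx mx3_scale; split; first by apply: mx3_ext; simp; ring.
  by simp; split; [|split; [|split]]; lra.
Qed.
Lemma dim_N010 : stab_lie_dim (base_pt (@nmx R 0 1 0)) = 1%N.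
Proof.
apply: (@dim_K1 _ _ _ (dmx 1 (-2) 1)).
- by apply/eqP => /dmx_eq0 [h _]; move/eqP: h; rewrite oner_eq0.
- move=> p q r t hx hy hz; exists p; rewrite /dmx mx3_scale; apply: mx3_ext; simp; lra.
- move=> k; exists k, (-2 * k), k; rewrite /dmx mx3_scale; split; first by apply: mx3_ext; simp; ring.
  by simp; split; [|split; [|split]]; lra.
Qed.
Lemma dim_N001 : stab_lie_dim (base_pt (@nmx R 0 0 1)) = 1%N.
Proof.
apply: (@dim_K1 _ _ _ (dmx (-2) 1 1)).
- by apply/eqP => /dmx_eq0 [_ [h _]]; move/eqP: h; rewrite oner_eq0.
- move=> p q r t hx hy hz; exists q; rewrite /dmx mx3_scale; apply: mx3_ext; simp; lra.
- move=> k; exists (-2 * k), k, k; rewrite /dmx mx3_scale; split; first by apply: mx3_ext; simp; ring.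
  by simp; split; [|split; [|split]]; lra.
Qed.

End L4.

Section L5.
Variable R : realType.
Local Notation M := 'M[R]_3.
Local Notation W := (@w0 R).

Lemma cube_root (c : R) : exists t : R, t * t * t = c.
Proof.
set s := `|c| + 1.
have s1 : 1 <= s by rewrite /s lerDr normr_ge0.
have hc1 : c <= `|c| := ler_norm c.
have hc2 : - `|c| <= c by rewrite lerNl -normrN ler_norm.
have s3 : s <= s * s * s by nra.
have h1 : - s <= s by lra.
have h2 : ('X^3 - c%:P).[- s] <= 0 <= ('X^3 - c%:P).[s].
  rewrite !hornerE /=; apply/andP; split.
  + have -> : (- s) ^+ 3 = - (s * s * s) by rewrite exprS expr2; ring.
    rewrite /s in s3 *; lra.
  + have -> : s ^+ 3 = s * s * s by rewrite exprS expr2; ring.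
    rewrite /s in s3 *; lra.
have [t _ rt] := @poly_ivt R ('X^3 - c%:P) (- s) s h1 h2.
exists t; move: rt; rewrite /root !hornerE /= subr_eq0 => /eqP <-.
by rewrite exprS expr2 mulrA.
Qed.



Lemma cube_nz (K : R) : K != 0 -> exists t : R, t * t * t = K /\ t != 0.
Proof.
move=> K0; have [t ht] := cube_root K; exists t; split => //.
by apply/eqP => t0; move: K0; rewrite -ht t0 !mul0r eqxx.
Qed.

Lemma normalize (a b c d e f : R) : a*d*f = 1 ->
  exists (r : rep R) (X Y Z al be ga : R), rep_valid r /\ rep_n r = nmx X Y Z /\
    al*be*ga = 1 /\ al != 0 /\ be != 0 /\ ga != 0 /\
    b = a*X*be/al /\ c = a*Y*ga/al /\ e = d*Z*ga/be.
Proof.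
move=> H; have [a0 [d0 f0]] := abc_nz H.
have {a0}a0 : a != 0 by apply/eqP. have {d0}d0 : d != 0 by apply/eqP.
have {f0}f0 : f != 0 by apply/eqP.
case: (eqVneq b 0) => [b0|b0]; case: (eqVneq c 0) => [c0|c0]; case: (eqVneq e 0) => [e0|e0].
-
  exists N000, 0, 0, 0, 1, 1, 1; subst; do 2 (split => //); simp; do 3 (split => //; rewrite ?oner_eq0).
-
  exists N001, 0, 0, 1, (d/e), 1, (e/d); subst; do 2 (split => //).
  split; first by field; nzs.
  split; first by nz. split; first by nz. split; first by nz.
  by split; [|split]; field; nzs.
-
  exists N010, 0, 1, 0, 1, (a/c), (c/a); subst; do 2 (split => //).
  split; first by field; nzs.
  split; first by nz. split; first by nz. split; first by nz.
  by split; [|split]; field; nzs.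
-
  have [t [ht t0]] : exists t : R, t * t * t = a*a*e/(c*c*d) /\ t != 0 by apply: cube_nz; nz.
  exists N011, 0, 1, 1, t, (t*c*d/(a*e)), (t*c/a); subst; do 2 (split => //).
  split.
    rewrite (_ : t*(t*c*d/(a*e))*(t*c/a) = (t*t*t)*(c*c*d/(a*a*e))); first by rewrite ht; field; nzs.
    by field; nzs.
  split; first by nz. split; first by nz. split; first by nz.
  by split; [|split]; field; nzs.
-
  exists N100, 1, 0, 0, 1, (b/a), (a/b); subst; do 2 (split => //).
  split; first by field; nzs.
  split; first by nz. split; first by nz. split; first by nz.
  by split; [|split]; field; nzs.
-
  have [t [ht t0]] : exists t : R, t * t * t = a*a*d/(b*b*e) /\ t != 0 by apply: cube_nz; nz.
  exists N101, 1, 0, 1, t, (t*b/a), (t*b*e/(a*d)); subst; do 2 (split => //).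
  split.
    rewrite (_ : t*(t*b/a)*(t*b*e/(a*d)) = (t*t*t)*(b*b*e/(a*a*d))); first by rewrite ht; field; nzs.
    by field; nzs.
  split; first by nz. split; first by nz. split; first by nz.
  by split; [|split]; field; nzs.
-
  have [t [ht t0]] : exists t : R, t * t * t = a*a/(b*c) /\ t != 0 by apply: cube_nz; nz.
  exists N110, 1, 1, 0, t, (t*b/a), (t*c/a); subst; do 2 (split => //).
  split.
    rewrite (_ : t*(t*b/a)*(t*c/a) = (t*t*t)*(b*c/(a*a))); first by rewrite ht; field; nzs.
    by field; nzs.
  split; first by nz. split; first by nz. split; first by nz.
  by split; [|split]; field; nzs.
-
  have [t [ht t0]] : exists t : R, t * t * t = a*a/(b*c) /\ t != 0 by apply: cube_nz; nz.
  exists (Gen (e*b/(d*c))), 1, 1, (e*b/(d*c)), t, (t*b/a), (t*c/a); split.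
    by apply/eqP; nz.
  split => //.
  split.
    rewrite (_ : t*(t*b/a)*(t*c/a) = (t*t*t)*(b*c/(a*a))); first by rewrite ht; field; nzs.
    by field; nzs.
  split; first by nz. split; first by nz. split; first by nz.
  by split; [|split]; field; nzs.
Qed.


Lemma inS_base (x y z : R) : in_S (base_pt (nmx x y z)).
Proof.
split; first exact: inX_base.
exists W, (W *m nmx x y z), 1%:M; split.
- exists 1%:M, 1%:M; split; first exact: inP1. split; first exact: inP1.
  by rewrite mul1mx mulmx1.
- exists 1%:M, (nmx x y z); split; first exact: inP1. split; first exact: inPn.
  by rewrite mul1mx.
- exact: inG1.
- apply/pt_eqP; first by apply: inX_act; [exact: inX_base | exact: inG1].
  by rewrite /act /= !mulmx1; split; apply: ceq_refl.
Qed.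

Lemma inP_inG (p : M) : inP p -> inG p. Proof. by case. Qed.

Lemma dmxW (al be ga : R) : al != 0 -> be != 0 -> ga != 0 ->
  dmx (1/ga) (1/be) (1/al) *m W *m dmx al be ga = W.
Proof.
move=> *; rewrite /dmx /w0 !mx3_mul; apply: mx3_ext; simp => //; by field; nzs.
Qed.

Lemma cover (y : pt R) : in_S y -> exists r : rep R, rep_valid r /\ in_Gorbit (base_pt (rep_n r)) y.
Proof.
case=> yX [v [v' [g [[p [q [pP [qP vE]]]] [p' [q' [pP' [qP' vE']]]] gG E]]]].
set m := q' *m invmx q.
have mP : inP m := inPM qP' (inPV qP).
have [a [b [c [d [e [f [mE H]]]]]]] := inP_form mP.
have [r [X [Y [Z [al [be [ga [rv [rn [Hp [al0 [be0 [ga0 [eb [ec ee]]]]]]]]]]]]]]] := @normalize a b c d e f H.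
exists r; split => //; split => //.
set dd := dmx al be ga.
have ddP : inP dd by apply: inP_mx3.
set h := dd *m q.
have hP : inP h := inPM ddP qP.
exists (h *m g); split; first by apply: inGM => //; apply: inP_inG.
have vG : inG v by rewrite vE; apply: inGM; [apply: inGM; [apply: inP_inG|exact: inGw0]|apply: inP_inG].
have vG' : inG v' by rewrite vE'; apply: inGM; [apply: inGM; [apply: inP_inG|exact: inGw0]|apply: inP_inG].
have X0 : inX (1%:M, v, v') by split => //; exact: inG1.
move/(pt_eqP _ (inX_act X0 gG)): E => [E1 E2 E3].
apply/pt_eqP.
  apply: inX_act; last by apply: inGM => //; apply: inP_inG.
  rewrite rn; exact: inX_base.
rewrite rn; split => /=.
- apply: ceq_trans E1 _; rewrite /= !mul1mx; rewrite -{1}[g]mul1mx; apply: ceq_mulr.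
  exists (invmx h); split; first exact: inPV.
  by rewrite mulVmx //; apply: inP_unit.
- apply: ceq_trans E2 _; rewrite /= mulmxA; apply: ceq_mulr.
  exists (p *m dmx (1/ga) (1/be) (1/al)); split.
    apply: inPM => //; apply: inP_mx3.
    rewrite (_ : 1 / ga * (1 / be) * (1 / al) = 1 / (al * be * ga)); first by rewrite Hp divr1.
    by field; nzs.
  by rewrite vE /h -{1}(dmxW al0 be0 ga0) !mulmxA.
- apply: ceq_trans E3 _; rewrite /= !mulmxA; apply: ceq_mulr.
  exists (p' *m dmx (f/ga) (d/be) (a/al)); split.
    apply: inPM => //; apply: inP_mx3.
    rewrite (_ : f / ga * (d / be) * (a / al) = (a * d * f) / (al * be * ga)); first by rewrite Hp H divr1.
    by field; nzs.
  have -> : v' = p' *m W *m m *m q.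
    by rewrite vE' /m -(mulmxA (p' *m W)) mulmxKV //; apply: inP_unit.
  have Tm : dmx (f/ga) (d/be) (a/al) *m W *m nmx X Y Z *m dd = W *m m.
    rewrite mE /dd /dmx /w0 /nmx eb ec ee !mx3_mul; apply: mx3_ext; simp => //; by field; nzs.
  rewrite /h; transitivity (p' *m (W *m m) *m q); first by rewrite /m !mulmxA.
  by rewrite -Tm !mulmxA.
Qed.

End L5.

Unset Implicit Arguments.

Theorem mainTheorem5 (R : realType) :
  (* every listed point lies in S_{w0,w0} *)
  (forall r : rep R, rep_valid r -> in_S (base_pt (rep_n r))) /\
  (* S_{w0,w0} is covered by the listed orbits *)
  (forall y, in_S y -> exists r : rep R, rep_valid r /\ in_Gorbit (base_pt (rep_n r)) y) /\
  (* the listed orbits are pairwise disjoint (distinct for distinct data) *)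
  (forall (r1 r2 : rep R) y, rep_valid r1 -> rep_valid r2 ->
     in_Gorbit (base_pt (rep_n r1)) y -> in_Gorbit (base_pt (rep_n r2)) y -> r1 = r2) /\
  (* (i) *)
  (forall u : R, u <> 0 -> orbit_dim (base_pt (nmx 1 1 u)) = 8%N) /\
  (* (ii) *)
  (forall r : rep R, r = N011 \/ r = N101 \/ r = N110 ->
     orbit_dim (base_pt (rep_n r)) = 8%N /\
     (forall g, in_stab (base_pt (rep_n r)) g <-> g = 1%:M)) /\
  (* (iii) *)
  (orbit_dim (base_pt (@nmx R 1 0 0)) = 7%N /\
   (forall g, in_stab (base_pt (@nmx R 1 0 0)) g <->
      exists a : R, a <> 0 /\ g = dmx a a (1 / a ^+ 2))) /\
  (orbit_dim (base_pt (@nmx R 0 1 0)) = 7%N /\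
   (forall g, in_stab (base_pt (@nmx R 0 1 0)) g <->
      exists a : R, a <> 0 /\ g = dmx a (1 / a ^+ 2) a)) /\
  (orbit_dim (base_pt (@nmx R 0 0 1)) = 7%N /\
   (forall g, in_stab (base_pt (@nmx R 0 0 1)) g <->
      exists a : R, a <> 0 /\ g = dmx (1 / a ^+ 2) a a)) /\
  (* (iv): stabilizer D = diagonal matrices of determinant 1 *)
  (orbit_dim (base_pt (@nmx R 0 0 0)) = 6%N /\
   (forall g, in_stab (base_pt (@nmx R 0 0 0)) g <->
      exists a b c : R, a * b * c = 1 /\ g = dmx a b c)).
Proof.
split.
  by move=> r _; case: r => [u|||||||] /=; apply: inS_base.
split; first exact: cover.
split; first exact: disjoint_orbits.
split; first by move=> u _; rewrite /orbit_dim dim_gen.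
split.
  move=> r [->|[->|->]] /=; split.
  - by rewrite /orbit_dim dim_N011.
  - exact: stab_N011.
  - by rewrite /orbit_dim dim_N101.
  - exact: stab_N101.
  - by rewrite /orbit_dim dim_N110.
  - exact: stab_N110.
split; first by split; [rewrite /orbit_dim dim_N100 | exact: stab_N100].
split; first by split; [rewrite /orbit_dim dim_N010 | exact: stab_N010].
split; first by split; [rewrite /orbit_dim dim_N001 | exact: stab_N001].
by split; [rewrite /orbit_dim dim_K2 | exact: stab_N000].
Qed.
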